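(* Let $X$ and $Q$ be defined as follows (indexed by layers $\ell\ge2$ and positions $0\le j\le n_\ell-1$, and ordered lexicographically in $(\ell,j)$, with $\vec q_0=\vec 0$ prepended to $Q$). Let $n_\ell:=\ell\lceil\ln^2\ell\rceil+1$, $\theta_\ell:=\frac{\pi}{2(n_\ell-1)}$, $\vec x_{\ell,j}:=(\cos(j\theta_\ell),\sin(j\theta_\ell))$ for even $\ell$ and $\vec x_{\ell,j}:=(\sin(j\theta_\ell),\cos(j\theta_\ell))$ for odd $\ell$. Let $\alpha:=\sum_{\ell=2}^\infty\frac1{\ell\ln^2\ell}$, $z_\ell:=\frac1\alpha\sum_{m=2}^\ell\frac1{m\ln^2 m}$ (so $z_1=0$), $\delta_\ell:=z_\ell-z_{\ell-1}=\frac{1}{\alpha\ell\ln^2\ell}$, $z_{\ell,j}:=1-\delta_\ell\cot((j+1)\theta_\ell)$ for $j<n_\ell-1$ and $z_{\ell,n_\ell-1}:=1$. For even $\ell$, $\vec q_{\ell,j}:=(z_\ell,z_{\ell,j})$; for odd $\ell$, $\vec q_{\ell,j}$ is any maximizer of $\vec x_{\ell,j}\cdot\vec q_{\ell',j'}$ over all $(\ell',j')$ with $\ell'<\ell$. Then $\mathrm{MenuGap}(X,Q)=\infty$.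
   Context: MenuGap: Let $X=(\vec x_i)_{i=1}^N$ be an ordered sequence of nonzero points of $\mathbb{R}^k_{\ge0}$ ($N$ finite or $+\infty$), and $Q=(\vec q_i)_{i=0}^N$ an ordered sequence of points of $[0,1]^k$ with $\vec q_0=(0,\dots,0)$. Define $\mathrm{gap}_i^{X,Q}:=\min_{0\le j<i}(\vec q_i-\vec q_j)\cdot\vec x_i$ and $\mathrm{MenuGap}(X,Q):=\sum_{i=1}^N \mathrm{gap}_i^{X,Q}/\|\vec x_i\|_1$. *)

(* Defs.v *)
From Stdlib Require Import Reals Lra Lia Arith.
From Coquelicot Require Import Coquelicot.
Open Scope R_scope.

Fixpoint rsum (f : nat -> R) (n : nat) : R :=
  match n with O => 0 | S m => rsum f m + f m end.

Definition dotk (k : nat) (u v : nat -> R) : R := rsum (fun t => u t * v t) k.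
Definition norm1 (k : nat) (u : nat -> R) : R := rsum (fun t => Rabs (u t)) k.

Fixpoint fmin (n : nat) (f : nat -> R) : R :=
  match n with O => f O | S m => Rmin (fmin m f) (f (S m)) end.

(* X i (i >= 1) are the points x_i, Q i (i >= 0) the points q_i.
   gap_i = min_{0 <= j < i} (q_i - q_j) . x_i   (for i >= 1) *)
Definition gap (k : nat) (X Q : nat -> nat -> R) (i : nat) : R :=
  fmin (i - 1) (fun j => dotk k (fun t => Q i t - Q j t) (X i)).

Definition MenuGap_partial (k : nat) (X Q : nat -> nat -> R) (N : nat) : R :=
  rsum (fun i => gap k X Q (S i) / norm1 k (X (S i))) N.

Definition MenuGap_is (k : nat) (X Q : nat -> nat -> R) (v : Rbar) : Prop :=
  is_lim_seq (MenuGap_partial k X Q) v.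

(* ceiling of a real, as a natural number (for nonnegative arguments) *)
Definition nceil (x : R) : nat := Z.to_nat (- Int_part (- x)).

Definition vec2 (a b : R) : nat -> R :=
  fun t => match t with O => a | 1%nat => b | _ => 0 end.

Definition nl (l : nat) : nat := (l * nceil (ln (INR l) ^ 2) + 1)%nat.

Definition theta (l : nat) : R := PI / (2 * INR (nl l - 1)).

Definition xv (l j : nat) : nat -> R :=
  if Nat.even l then vec2 (cos (INR j * theta l)) (sin (INR j * theta l))
  else vec2 (sin (INR j * theta l)) (cos (INR j * theta l)).

Definition harm_term (m : nat) : R :=
  if (2 <=? m)%nat then 1 / (INR m * ln (INR m) ^ 2) else 0.

Definition alpha : R := Series harm_term.

Definition zl (l : nat) : R := / alpha * rsum harm_term (S l).

Definition delta (l : nat) : R := zl l - zl (l - 1).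

Definition zlj (l j : nat) : R :=
  if (S j <? nl l)%nat
  then 1 - delta l * (cos (INR (S j) * theta l) / sin (INR (S j) * theta l))
  else 1.

Definition qeven (l j : nat) : nat -> R := vec2 (zl l) (zlj l j).

(* lexicographic enumeration of pairs (l, j), l >= 2, 0 <= j < n_l *)
Fixpoint pos (i : nat) : nat * nat :=
  match i with
  | O => (2%nat, O)
  | S i' => let (l, j) := pos i' in
            if (S j <? nl l)%nat then (l, S j) else (S l, O)
  end.

(* flattened sequences: X_i = x_{pos(i-1)} for i >= 1; Q_0 = 0, Q_i = q_{pos(i-1)} *)
Definition Xseq (i : nat) : nat -> R := let (l, j) := pos (i - 1) in xv l j.
Definition Qseq (q : nat -> nat -> nat -> R) (i : nat) : nat -> R :=
  match i with
  | O => fun _ => 0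
  | S i' => let (l, j) := pos i' in q l j
  end.

Definition q_admissible (q : nat -> nat -> nat -> R) : Prop :=
  (forall l j, (2 <= l)%nat -> Nat.even l = true -> (j < nl l)%nat ->
     q l j = qeven l j) /\
  (forall l j, (3 <= l)%nat -> Nat.odd l = true -> (j < nl l)%nat ->
     exists l' j', (2 <= l')%nat /\ (l' < l)%nat /\ (j' < nl l')%nat /\
       q l j = q l' j' /\
       forall l'' j'', (2 <= l'')%nat -> (l'' < l)%nat -> (j'' < nl l'')%nat ->
         dotk 2 (xv l j) (q l'' j'') <= dotk 2 (xv l j) (q l' j')).

(* Main.v *)
Require Import Defs.
From Stdlib Require Import Reals Lra Lia.
From Coquelicot Require Import Coquelicot.
Open Scope R_scope.
Lemma ln_le_xm1 x : 0 < x -> ln x <= x - 1.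
Proof. intros Hx. pose proof (exp_ineq1_le (ln x)). rewrite exp_ln in H; lra. Qed.

Lemma INR_ge2 m : (2 <= m)%nat -> 2 <= INR m.
Proof. intros H. apply (le_INR 2) in H. simpl in H. lra. Qed.

Lemma ln_pos_ge2 m : (2 <= m)%nat -> 0 < ln (INR m).
Proof. intros H. apply INR_ge2 in H. rewrite <- ln_1. apply ln_increasing; lra. Qed.

Lemma harm_nonneg m : 0 <= harm_term m.
Proof.
  unfold harm_term. destruct (2 <=? m)%nat eqn:E; [|lra].
  apply Nat.leb_le in E. pose proof (ln_pos_ge2 m E). pose proof (INR_ge2 m E).
  apply Rlt_le. unfold Rdiv. rewrite Rmult_1_l. apply Rinv_0_lt_compat.
  apply Rmult_lt_0_compat; [lra|]. simpl. nra.
Qed.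

Lemma harm_pos m : (2 <= m)%nat -> 0 < harm_term m.
Proof.
  intros E. unfold harm_term. replace (2 <=? m)%nat with true by (symmetry; apply Nat.leb_le; lia).
  pose proof (ln_pos_ge2 m E). pose proof (INR_ge2 m E).
  unfold Rdiv. rewrite Rmult_1_l. apply Rinv_0_lt_compat.
  apply Rmult_lt_0_compat; [lra|]. simpl. nra.
Qed.

Lemma sumS (a : nat -> R) n : sum_n a (S n) = sum_n a n + a (S n).
Proof. rewrite sum_Sn. reflexivity. Qed.
Lemma sum0 (a : nat -> R) : sum_n a 0 = a 0%nat.
Proof. apply sum_O. Qed.

Lemma harm_step n : (2 <= n)%nat ->
  harm_term (S n) <= 1 / ln (INR n) - 1 / ln (INR (S n)).
Proof.
  intros Hn. unfold harm_term. replace (2 <=? S n)%nat with true by (symmetry; apply Nat.leb_le; lia).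
  pose proof (INR_ge2 n Hn) as Hn2. rewrite S_INR.
  pose proof (ln_pos_ge2 n Hn) as L0p.
  assert (L01 : ln (INR n) <= ln (INR n + 1)) by (apply ln_le; lra).
  assert (Hd : / (INR n + 1) <= ln (INR n + 1) - ln (INR n)).
  { pose proof (ln_le_xm1 (INR n / (INR n + 1))) as H.
    rewrite ln_div in H by lra.
    assert (INR n / (INR n + 1) - 1 = - / (INR n + 1)) by (field; lra).
    assert (0 < INR n / (INR n + 1)) by (apply Rdiv_lt_0_compat; lra). lra. }
  set (L0 := ln (INR n)) in *. set (L1 := ln (INR n + 1)) in *.
  set (N := INR n + 1) in *.
  assert (0 < N) by (unfold N; lra).
  replace (1 / (N * L1 ^ 2)) with (/N * /L1 * /L1) by (field; lra).
  replace (1 / L0 - 1 / L1) with ((L1 - L0) * /L0 * /L1) by (field; lra).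
  assert (/L1 <= /L0) by (apply Rinv_le_contravar; lra).
  assert (0 < /L1) by (apply Rinv_0_lt_compat; lra).
  assert (0 < /N) by (apply Rinv_0_lt_compat; lra).
  apply Rmult_le_compat_r; [lra|]. apply Rmult_le_compat; lra.
Qed.

Lemma harm_small n : (n < 2)%nat -> harm_term n = 0.
Proof. intros H. unfold harm_term. replace (2 <=? n)%nat with false by (symmetry; apply Nat.leb_gt; lia). reflexivity. Qed.

Lemma harm_partial_bound n : (2 <= n)%nat ->
  sum_n harm_term n <= harm_term 2 + 1 / ln 2 - 1 / ln (INR n).
Proof.
  induction n as [|n IH]; intros Hn; [lia|].
  destruct (Nat.eq_dec n 1) as [->|Hn1].
  - rewrite sumS, sumS, sum0.
    rewrite (harm_small 0), (harm_small 1) by lia.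
    replace (INR 2) with 2 by (simpl; ring). lra.
  - rewrite sumS.
    pose proof (IH ltac:(lia)). pose proof (harm_step n ltac:(lia)). lra.
Qed.

Lemma harm_bounded n : sum_n harm_term n <= harm_term 2 + 1 / ln 2.
Proof.
  destruct (Compare_dec.le_lt_dec 2 n) as [H|H].
  - pose proof (harm_partial_bound n H). pose proof (ln_pos_ge2 n H).
    assert (0 < 1 / ln (INR n)) by (apply Rdiv_lt_0_compat; lra). lra.
  - assert (sum_n harm_term n = 0).
    { destruct n as [|[|n]]; [| |lia].
      - rewrite sum_O; apply harm_small; lia.
      - rewrite sumS, sum0. rewrite (harm_small 0), (harm_small 1) by lia. lra. }
    pose proof (harm_pos 2 (le_n 2)). assert (0 < 1 / ln 2).
    { apply Rdiv_lt_0_compat; [lra|]. pose proof (ln_pos_ge2 2 (le_n 2)). replace (INR 2) with 2 in H2 by (simpl; ring). lra. }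
    lra.
Qed.

Lemma harm_incr n : sum_n harm_term n <= sum_n harm_term (S n).
Proof. rewrite sumS. pose proof (harm_nonneg (S n)). lra. Qed.

Lemma alpha_pos : 0 < alpha.
Proof.
  assert (Hex : ex_finite_lim_seq (sum_n harm_term)).
  { apply (ex_finite_lim_seq_incr _ (harm_term 2 + 1 / ln 2)); [apply harm_incr|apply harm_bounded]. }
  destruct Hex as [l Hl].
  unfold alpha, Series. rewrite (is_lim_seq_unique _ _ Hl). simpl.
  pose proof (is_lim_seq_incr_compare _ _ Hl harm_incr 2).
  rewrite sumS, sumS, sum0 in H.
  rewrite (harm_small 0), (harm_small 1) in H by lia.
  pose proof (harm_pos 2 (le_n 2)). lra.
Qed.

Lemma lnln_step l : (2 <= l)%nat ->
  ln (ln (INR l + 2)) - ln (ln (INR l)) <= 2 / (INR l * ln (INR l)).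
Proof.
  intros Hl. pose proof (INR_ge2 l Hl). pose proof (ln_pos_ge2 l Hl).
  assert (ln (INR l) <= ln (INR l + 2)) by (apply ln_le; lra).
  rewrite <- ln_div by lra.
  pose proof (ln_le_xm1 (ln (INR l + 2) / ln (INR l)) ltac:(apply Rdiv_lt_0_compat; lra)).
  pose proof (ln_le_xm1 ((INR l + 2) / INR l) ltac:(apply Rdiv_lt_0_compat; lra)).
  rewrite ln_div in H3 by lra.
  assert ((INR l + 2) / INR l - 1 = 2 / INR l) by (field; lra).
  assert (ln (INR l + 2) / ln (INR l) - 1 = (ln (INR l + 2) - ln (INR l)) / ln (INR l)) by (field; lra).
  assert ((ln (INR l + 2) - ln (INR l)) / ln (INR l) <= (2 / INR l) / ln (INR l)).
  { apply Rmult_le_compat_r; [apply Rlt_le, Rinv_0_lt_compat; lra|]. lra. }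
  replace (2 / (INR l * ln (INR l))) with (2 / INR l / ln (INR l)) by (field; lra). lra.
Qed.
Lemma nceil_pos x : 0 < x -> (1 <= nceil x)%nat.
Proof.
  intros Hx. unfold nceil. destruct (base_Int_part (- x)) as [H1 _].
  assert (IZR (Int_part (-x)) < IZR 0) by (simpl; lra).
  apply lt_IZR in H. lia.
Qed.

Lemma nl_ge l : (2 <= l)%nat -> (l <= nl l - 1)%nat /\ (nl l - 1 + 1 = nl l)%nat.
Proof.
  intros Hl. unfold nl.
  assert (1 <= nceil (ln (INR l) ^ 2))%nat.
  { apply nceil_pos. pose proof (ln_pos_ge2 l Hl). simpl. nra. }
  nia.
Qed.

Fixpoint Sidx (l : nat) : nat :=
  match l with O => O | S m => if (2 <=? m)%nat then (Sidx m + nl m)%nat else O end.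

Lemma Sidx_S l : (2 <= l)%nat -> Sidx (S l) = (Sidx l + nl l)%nat.
Proof. intros H. destruct l as [|[|l]]; [lia|lia|reflexivity]. Qed.

Lemma Sidx_2 : Sidx 2 = 0%nat.
Proof. reflexivity. Qed.

Lemma Sidx_lt l1 l : (2 <= l1)%nat -> (l1 < l)%nat -> (Sidx l1 + nl l1 <= Sidx l)%nat.
Proof.
  intros H1 H. induction H.
  - rewrite Sidx_S by lia. lia.
  - rewrite Sidx_S by lia. lia.
Qed.

Lemma pos_inv i l j : Defs.pos i = (l, j) -> (2 <= l)%nat /\ (j < nl l)%nat /\ i = (Sidx l + j)%nat.
Proof.
  revert l j. induction i as [|i IH]; intros l j E.
  - simpl in E. inversion E; subst. unfold nl. split; [lia|split; [lia|reflexivity]].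
  - simpl in E. destruct (Defs.pos i) as [l0 j0] eqn:E0.
    destruct (IH l0 j0 eq_refl) as [A [B C]].
    destruct (S j0 <? nl l0)%nat eqn:E1.
    + inversion E; subst. apply Nat.ltb_lt in E1. lia.
    + inversion E; subst. apply Nat.ltb_ge in E1.
      rewrite Sidx_S by lia. unfold nl at 1. lia.
Qed.

Lemma pos_at l j : (2 <= l)%nat -> (j < nl l)%nat -> Defs.pos (Sidx l + j) = (l, j).
Proof.
  intros Hl Hj. destruct (Defs.pos (Sidx l + j)) as [l1 j1] eqn:E.
  destruct (pos_inv _ _ _ E) as [A [B C]].
  destruct (Nat.lt_trichotomy l1 l) as [H|[H|H]].
  - pose proof (Sidx_lt l1 l A H). lia.
  - subst. f_equal. lia.
  - pose proof (Sidx_lt l l1 Hl H). lia.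
Qed.

Lemma pos_before i0 l j j0 l1 j1 : Defs.pos i0 = (l, j) -> Defs.pos j0 = (l1, j1) -> (j0 < i0)%nat ->
  (2 <= l1)%nat /\ (j1 < nl l1)%nat /\ ((l1 < l)%nat \/ (l1 = l /\ (j1 < j)%nat)).
Proof.
  intros E E1 H.
  destruct (pos_inv _ _ _ E) as [A [B C]]. destruct (pos_inv _ _ _ E1) as [A1 [B1 C1]].
  split; [lia|split; [lia|]].
  destruct (Nat.lt_trichotomy l1 l) as [H2|[H2|H2]].
  - left; lia.
  - right; subst; lia.
  - pose proof (Sidx_lt l l1 A H2). lia.
Qed.
Lemma theta_pos l : (2 <= l)%nat -> 0 < theta l /\ INR (nl l - 1) * theta l = PI / 2.
Proof.
  intros Hl. destruct (nl_ge l Hl) as [A _].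
  assert (2 <= INR (nl l - 1)) by (apply (le_INR 2) in Hl; apply le_INR in A; simpl in Hl; lra).
  pose proof PI_RGT_0. unfold theta. split.
  - apply Rdiv_lt_0_compat; lra.
  - field; lra.
Qed.

Lemma ang_range l k : (2 <= l)%nat -> (k <= nl l - 1)%nat ->
  0 <= INR k * theta l <= PI / 2.
Proof.
  intros Hl Hk. destruct (theta_pos l Hl) as [T E].
  apply le_INR in Hk. pose proof (pos_INR k). split; [nra|]. rewrite <- E. nra.
Qed.

Lemma ang_pos l k : (2 <= l)%nat -> (1 <= k)%nat -> 0 < INR k * theta l.
Proof.
  intros Hl Hk. destruct (theta_pos l Hl) as [T E]. apply (le_INR 1) in Hk. simpl in Hk. nra.
Qed.

Lemma sin_mul_le k x : 0 <= x -> INR k * x <= PI / 2 -> sin (INR k * x) <= INR k * sin x.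
Proof.
  intros Hx. induction k as [|k IH]; intros Hk.
  - simpl. rewrite Rmult_0_l, sin_0. lra.
  - rewrite S_INR in *. pose proof (pos_INR k). pose proof PI_RGT_0.
    assert (INR k * x <= PI / 2) by nra.
    specialize (IH H1).
    replace ((INR k + 1) * x) with (INR k * x + x) by ring. rewrite sin_plus.
    assert (0 <= sin (INR k * x)) by (apply sin_ge_0; nra).
    assert (0 <= sin x) by (apply sin_ge_0; nra).
    pose proof (COS_bound x). pose proof (COS_bound (INR k * x)). nra.
Qed.

Lemma cot_mono a b : 0 < a -> a <= b -> b <= PI / 2 -> cos b / sin b <= cos a / sin a.
Proof.
  intros Ha Hab Hb. pose proof PI_RGT_0.
  assert (0 < sin a) by (apply sin_gt_0; lra).
  assert (0 < sin b) by (apply sin_gt_0; lra).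
  assert (0 <= sin (b - a)) by (apply sin_ge_0; lra).
  rewrite sin_minus in H2.
  apply (Rmult_le_reg_r (sin a * sin b)); [nra|].
  replace (cos b / sin b * (sin a * sin b)) with (cos b * sin a) by (field; lra).
  replace (cos a / sin a * (sin a * sin b)) with (cos a * sin b) by (field; lra).
  lra.
Qed.

Lemma key_id a t d : 0 < sin (a + t) ->
  cos a * d - sin a * d * (cos (a + t) / sin (a + t)) = d * sin t / sin (a + t).
Proof.
  intros H. replace (sin t) with (sin ((a + t) - a)) by (f_equal; ring).
  rewrite sin_minus. field. lra.
Qed.

Lemma rsum_mono_n (f : nat -> R) a b : (forall i, 0 <= f i) -> (a <= b)%nat -> rsum f a <= rsum f b.
Proof.
  intros Hf H. induction H; [lra|]. simpl. pose proof (Hf m). lra.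
Qed.

Lemma rsum_nonneg (f : nat -> R) n : (forall i, 0 <= f i) -> 0 <= rsum f n.
Proof. intros Hf. induction n; simpl; [lra|]. pose proof (Hf n). lra. Qed.

Lemma zl_mono a b : (a <= b)%nat -> zl a <= zl b.
Proof.
  intros H. unfold zl. apply Rmult_le_compat_l.
  - apply Rlt_le, Rinv_0_lt_compat, alpha_pos.
  - apply rsum_mono_n; [apply harm_nonneg|lia].
Qed.

Lemma zl_nonneg a : 0 <= zl a.
Proof.
  unfold zl. apply Rmult_le_pos; [apply Rlt_le, Rinv_0_lt_compat, alpha_pos|].
  apply rsum_nonneg, harm_nonneg.
Qed.

Lemma delta_eq l : (1 <= l)%nat -> delta l = harm_term l / alpha.
Proof.
  intros H. unfold delta, zl. replace (S (l - 1)) with l by lia.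
  simpl rsum at 1. pose proof alpha_pos. field. lra.
Qed.

Lemma delta_nonneg l : (1 <= l)%nat -> 0 <= delta l.
Proof.
  intros H. rewrite delta_eq by lia. pose proof alpha_pos. pose proof (harm_nonneg l).
  apply Rmult_le_pos; [lra|]. apply Rlt_le, Rinv_0_lt_compat; lra.
Qed.

Lemma zlj_le1 l j : (2 <= l)%nat -> (j < nl l)%nat -> zlj l j <= 1.
Proof.
  intros Hl Hj. unfold zlj. destruct (S j <? nl l)%nat eqn:E; [|lra].
  apply Nat.ltb_lt in E.
  pose proof (ang_range l (S j) Hl ltac:(lia)).
  pose proof (ang_pos l (S j) Hl ltac:(lia)).
  pose proof PI_RGT_0.
  assert (0 < sin (INR (S j) * theta l)) by (apply sin_gt_0; lra).
  assert (0 <= cos (INR (S j) * theta l)) by (apply cos_ge_0; lra).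
  pose proof (delta_nonneg l ltac:(lia)).
  assert (0 <= cos (INR (S j) * theta l) / sin (INR (S j) * theta l)) by (apply Rdiv_le_0_compat; lra).
  nra.
Qed.

Lemma zlj_last l : zlj l (nl l - 1) = 1.
Proof.
  unfold zlj. replace (S (nl l - 1)) with (nl l) by (unfold nl; lia).
  rewrite Nat.ltb_irrefl. reflexivity.
Qed.

Lemma dot2 u v : dotk 2 u v = u 0%nat * v 0%nat + u 1%nat * v 1%nat.
Proof. unfold dotk. simpl. ring. Qed.

Lemma norm2 u : norm1 2 u = Rabs (u 0%nat) + Rabs (u 1%nat).
Proof. unfold norm1. simpl. ring. Qed.

Lemma xv_coords l j : (2 <= l)%nat -> (j <= nl l - 1)%nat ->
  0 <= xv l j 0%nat /\ 0 <= xv l j 1%nat /\ xv l j 0%nat ^ 2 + xv l j 1%nat ^ 2 = 1.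
Proof.
  intros Hl Hj. pose proof (ang_range l j Hl Hj). pose proof PI_RGT_0.
  assert (0 <= sin (INR j * theta l)) by (apply sin_ge_0; lra).
  assert (0 <= cos (INR j * theta l)) by (apply cos_ge_0; lra).
  pose proof (sin2_cos2 (INR j * theta l)). unfold Rsqr in H3.
  unfold xv. destruct (Nat.even l); simpl; repeat split; try lra; nra.
Qed.

Lemma xv_even l j : Nat.even l = true ->
  xv l j 0%nat = cos (INR j * theta l) /\ xv l j 1%nat = sin (INR j * theta l).
Proof. intros E. unfold xv. rewrite E. simpl. split; reflexivity. Qed.
Lemma even_or_odd3 l : (2 <= l)%nat -> Nat.even l = true \/ ((3 <= l)%nat /\ Nat.odd l = true).
Proof.
  intros H. destruct (Nat.even l) eqn:E; [left; reflexivity|right].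
  split.
  - destruct (Nat.eq_dec l 2) as [->|]; [discriminate|lia].
  - rewrite <- Nat.negb_even, E. reflexivity.
Qed.

Lemma qbound q : q_admissible q -> forall l j, (2 <= l)%nat -> (j < nl l)%nat ->
  q l j 0%nat <= zl l /\ q l j 1%nat <= 1.
Proof.
  intros [Hev Hod] l. induction l as [l IH] using (well_founded_induction Wf_nat.lt_wf).
  intros j Hl Hj. destruct (even_or_odd3 l Hl) as [E|[H3 O]].
  - rewrite (Hev l j Hl E Hj). unfold qeven, vec2. split; [lra|]. apply zlj_le1; auto.
  - destruct (Hod l j H3 O Hj) as [l' [j' [A [B [C [D _]]]]]].
    rewrite D. destruct (IH l' B j' A C). split; [|lra].
    pose proof (zl_mono l' l ltac:(lia)). lra.
Qed.

Lemma fmin_ge n (f : nat -> R) b : (forall jj, (jj <= n)%nat -> b <= f jj) -> b <= fmin n f.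
Proof.
  induction n as [|n IH]; intros H; simpl.
  - apply H; lia.
  - apply Rmin_glb; [apply IH; intros; apply H; lia|apply H; lia].
Qed.

Lemma gap_unfold q i0 l j : Defs.pos i0 = (l, j) ->
  gap 2 Xseq (Qseq q) (S i0) =
  fmin i0 (fun jj => dotk 2 (fun t => q l j t - Qseq q jj t) (xv l j)).
Proof.
  intros E. unfold gap. replace (S i0 - 1)%nat with i0 by lia.
  unfold Xseq at 1. replace (S i0 - 1)%nat with i0 by lia. rewrite E.
  simpl Qseq at 1. rewrite E. reflexivity.
Qed.

Lemma Q_S q j0 l1 j1 : Defs.pos j0 = (l1, j1) -> Qseq q (S j0) = q l1 j1.
Proof. intros E. simpl. rewrite E. reflexivity. Qed.

Lemma gap_odd q i0 l j : q_admissible q -> Defs.pos i0 = (l, j) -> (3 <= l)%nat -> Nat.odd l = true ->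
  0 <= gap 2 Xseq (Qseq q) (S i0).
Proof.
  intros Hq E H3 O. pose proof Hq as [Hev Hod].
  destruct (pos_inv _ _ _ E) as [Al [Bl _]].
  assert (Hmax : forall l'' j'', (2 <= l'')%nat -> (l'' < l)%nat -> (j'' < nl l'')%nat ->
            dotk 2 (xv l j) (q l'' j'') <= dotk 2 (xv l j) (q l j)).
  { intros l'' j'' a b c. destruct (Hod l j H3 O Bl) as [l' [j' [A [B [C [D F]]]]]].
    rewrite D. apply F; auto. }
  rewrite (gap_unfold q i0 l j E). apply fmin_ge. intros jj Hjj.
  rewrite dot2.
  destruct (xv_coords l j Al ltac:(lia)) as [x0 [x1 _]].
  destruct jj as [|j0].
  - simpl Qseq.
    pose proof (Hmax 2%nat (nl 2 - 1)%nat (le_n 2) ltac:(lia) ltac:(unfold nl; lia)) as M.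
    rewrite (Hev 2%nat (nl 2 - 1)%nat (le_n 2) eq_refl ltac:(unfold nl; lia)) in M.
    rewrite !dot2 in M. unfold qeven, vec2 in M. rewrite zlj_last in M.
    pose proof (zl_nonneg 2). nra.
  - destruct (Defs.pos j0) as [l1 j1] eqn:E1.
    rewrite (Q_S q j0 l1 j1 E1).
    destruct (pos_before i0 l j j0 l1 j1 E E1 ltac:(lia)) as [A1 [B1 [C1|[C1 D1]]]].
    + pose proof (Hmax l1 j1 A1 C1 B1) as M. rewrite !dot2 in M. lra.
    + subst l1. destruct (Hod l j1 H3 O B1) as [l' [j' [A [B [C [D _]]]]]].
      rewrite D. pose proof (Hmax l' j' A B C) as M. rewrite !dot2 in M. lra.
Qed.

Definition Lb (l j : nat) : R := if (S j <? nl l)%nat then delta l / INR (S j) else 0.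

Lemma Bhelp d st sb N : 0 <= d -> 0 < st -> 0 < sb -> sb <= N * st -> d / N <= d * st / sb.
Proof.
  intros Hd Hst Hsb H. assert (0 < N) by nra.
  replace (d / N) with (d * st / (N * st)) by (field; lra).
  unfold Rdiv. rewrite !Rmult_assoc. apply Rmult_le_compat_l; [lra|].
  apply Rmult_le_compat_l; [lra|]. apply Rinv_le_contravar; lra.
Qed.

Lemma main_B l j : (2 <= l)%nat -> (S j < nl l)%nat ->
  delta l / INR (S j) <=
  cos (INR j * theta l) * delta l - sin (INR j * theta l) * delta l *
    (cos (INR (S j) * theta l) / sin (INR (S j) * theta l)).
Proof.
  intros Hl Hj. destruct (theta_pos l Hl) as [T _].
  pose proof (ang_range l (S j) Hl ltac:(lia)) as Rb.
  pose proof (ang_pos l (S j) Hl ltac:(lia)) as Pb.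
  pose proof (ang_range l 1 Hl ltac:(pose proof (nl_ge l Hl); lia)) as R1.
  replace (INR 1) with 1 in R1 by reflexivity. rewrite Rmult_1_l in R1.
  pose proof PI_RGT_0.
  assert (Hsb : 0 < sin (INR (S j) * theta l)) by (apply sin_gt_0; lra).
  assert (Hst : 0 < sin (theta l)) by (apply sin_gt_0; lra).
  assert (Eb : INR (S j) * theta l = INR j * theta l + theta l) by (rewrite S_INR; ring).
  rewrite Eb in *. rewrite key_id by lra.
  apply Bhelp; auto. apply delta_nonneg; lia.
  rewrite <- Eb. apply sin_mul_le; lra.
Qed.

Lemma case_b l j p0 p1 : (2 <= l)%nat -> Nat.even l = true -> (j < nl l)%nat ->
  p0 <= zl (l - 1) -> p1 <= 1 ->
  Lb l j <= (zl l - p0) * cos (INR j * theta l) + (zlj l j - p1) * sin (INR j * theta l).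
Proof.
  intros Hl E Hj H0 H1.
  destruct (xv_coords l j Hl ltac:(lia)) as [c0 [s0 _]].
  destruct (xv_even l j E) as [Ec Es]. rewrite Ec in c0. rewrite Es in s0.
  pose proof (delta_nonneg l ltac:(lia)) as Dn.
  assert (Ed : zl l = delta l + zl (l - 1)) by (unfold delta; ring).
  set (c := cos (INR j * theta l)) in *. set (s := sin (INR j * theta l)) in *.
  assert (G : delta l * c + (zlj l j - 1) * s <= (zl l - p0) * c + (zlj l j - p1) * s) by nra.
  unfold Lb. destruct (S j <? nl l)%nat eqn:Ej.
  - apply Nat.ltb_lt in Ej. pose proof (main_B l j Hl Ej) as M. fold c s in M.
    unfold zlj in G |- *. rewrite (proj2 (Nat.ltb_lt _ _) Ej) in G |- *. nra.
  - unfold zlj in G |- *. rewrite Ej in G |- *. nra.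
Qed.

Lemma case_a l j j1 : (2 <= l)%nat -> Nat.even l = true -> (j < nl l)%nat -> (j1 < j)%nat ->
  Lb l j <= (zl l - zl l) * cos (INR j * theta l) + (zlj l j - zlj l j1) * sin (INR j * theta l).
Proof.
  intros Hl E Hj Hj1.
  destruct (xv_coords l j Hl ltac:(lia)) as [c0 [s0 _]].
  destruct (xv_even l j E) as [Ec Es]. rewrite Ec in c0. rewrite Es in s0.
  pose proof (delta_nonneg l ltac:(lia)) as Dn.
  unfold Lb. destruct (S j <? nl l)%nat eqn:Ej.
  - apply Nat.ltb_lt in Ej. pose proof (main_B l j Hl Ej) as M.
    unfold zlj. rewrite (proj2 (Nat.ltb_lt _ _) Ej).
    rewrite (proj2 (Nat.ltb_lt (S j1) (nl l)) ltac:(lia)).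
    pose proof (ang_range l j Hl ltac:(lia)) as Ra.
    pose proof (ang_pos l j Hl ltac:(lia)) as Pa.
    pose proof (ang_pos l (S j1) Hl ltac:(lia)) as Pb1.
    pose proof PI_RGT_0.
    assert (Hsa : 0 < sin (INR j * theta l)) by (apply sin_gt_0; lra).
    destruct (theta_pos l Hl) as [T _].
    assert (Le : INR (S j1) * theta l <= INR j * theta l).
    { apply Rmult_le_compat_r; [lra|]. apply le_INR; lia. }
    pose proof (cot_mono _ _ Pb1 Le ltac:(lra)) as CM.
    set (c := cos (INR j * theta l)) in *. set (s := sin (INR j * theta l)) in *.
    set (kb := cos (INR (S j) * theta l) / sin (INR (S j) * theta l)) in *.
    set (k1 := cos (INR (S j1) * theta l) / sin (INR (S j1) * theta l)) in *.
    assert (Ec2 : s * (c / s) = c) by (field; lra).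
    set (ka := c / s) in *.
    assert (s * delta l * (ka - kb) <= s * delta l * (k1 - kb)).
    { apply Rmult_le_compat_l; [nra|lra]. }
    nra.
  - unfold zlj at 1. rewrite Ej. pose proof (zlj_le1 l j1 Hl ltac:(lia)). nra.
Qed.

Lemma gap_even q i0 l j : q_admissible q -> Defs.pos i0 = (l, j) -> Nat.even l = true ->
  Lb l j <= gap 2 Xseq (Qseq q) (S i0).
Proof.
  intros Hq E Ev. pose proof Hq as [Hev Hod].
  destruct (pos_inv _ _ _ E) as [Al [Bl _]].
  rewrite (gap_unfold q i0 l j E). apply fmin_ge. intros jj Hjj.
  rewrite dot2. destruct (xv_even l j Ev) as [Ec Es]. rewrite Ec, Es.
  rewrite (Hev l j Al Ev Bl). unfold qeven, vec2 at 1 2.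
  destruct jj as [|j0].
  - simpl Qseq. apply case_b; auto. apply zl_nonneg. lra.
  - destruct (Defs.pos j0) as [l1 j1] eqn:E1.
    rewrite (Q_S q j0 l1 j1 E1).
    destruct (pos_before i0 l j j0 l1 j1 E E1 ltac:(lia)) as [A1 [B1 [C1|[C1 D1]]]].
    + destruct (qbound q Hq l1 j1 A1 B1). apply case_b; auto.
      pose proof (zl_mono l1 (l - 1) ltac:(lia)). lra.
    + subst l1. rewrite (Hev l j1 Al Ev B1). unfold qeven, vec2. apply case_a; auto.
Qed.

Lemma rsum_split (f : nat -> R) a b : rsum f (a + b) = rsum f a + rsum (fun j => f (a + j)%nat) b.
Proof.
  induction b as [|b IH]; simpl.
  - rewrite Nat.add_0_r. ring.
  - rewrite Nat.add_succ_r. simpl. rewrite IH. ring.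
Qed.

Lemma rsum_le (f g : nat -> R) n : (forall i, (i < n)%nat -> f i <= g i) -> rsum f n <= rsum g n.
Proof.
  induction n as [|n IH]; intros H; simpl; [lra|].
  pose proof (H n ltac:(lia)). pose proof (IH ltac:(intros; apply H; lia)). lra.
Qed.

Lemma harmonic_ln l : ln (INR l + 1) <= rsum (fun j => / INR (S j)) l.
Proof.
  induction l as [|l IH]; cbn [rsum].
  - simpl. rewrite Rplus_0_l, ln_1. lra.
  - rewrite S_INR. pose proof (pos_INR l).
    pose proof (ln_le_xm1 ((INR l + 1 + 1) / (INR l + 1)) ltac:(apply Rdiv_lt_0_compat; lra)).
    rewrite ln_div in H0 by lra.
    assert ((INR l + 1 + 1) / (INR l + 1) - 1 = / (INR l + 1)) by (field; lra).
    lra.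
Qed.

Section Main.
Variable q : nat -> nat -> nat -> R.
Hypothesis Hq : q_admissible q.

Definition T (i : nat) : R := gap 2 Xseq (Qseq q) (S i) / norm1 2 (Xseq (S i)).

Lemma T_facts i l j : Defs.pos i = (l, j) ->
  0 <= gap 2 Xseq (Qseq q) (S i) /\ 0 < norm1 2 (Xseq (S i)) <= 2.
Proof.
  intros E. destruct (pos_inv _ _ _ E) as [Al [Bl _]].
  assert (X : Xseq (S i) = xv l j).
  { unfold Xseq. replace (S i - 1)%nat with i by lia. rewrite E. reflexivity. }
  rewrite X, norm2. destruct (xv_coords l j Al ltac:(lia)) as [x0 [x1 x2]].
  rewrite !Rabs_right by lra.
  assert (xv l j 0%nat <= 1) by nra. assert (xv l j 1%nat <= 1) by nra.
  split; [|split; nra].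
  destruct (even_or_odd3 l Al) as [Ev|[H3 O]].
  - eapply Rle_trans; [|apply (gap_even q i l j Hq E Ev)].
    unfold Lb. destruct (S j <? nl l)%nat; [|lra].
    apply Rdiv_le_0_compat; [apply delta_nonneg; lia|]. apply lt_0_INR; lia.
  - apply (gap_odd q i l j Hq E H3 O).
Qed.

Lemma T_nonneg i : 0 <= T i.
Proof.
  destruct (Defs.pos i) as [l j] eqn:E. destruct (T_facts i l j E) as [G [N1 N2]].
  unfold T. apply Rdiv_le_0_compat; lra.
Qed.

Lemma T_even l j : (2 <= l)%nat -> Nat.even l = true -> (j < l)%nat ->
  delta l / INR (S j) / 2 <= T (Sidx l + j).
Proof.
  intros Hl Ev Hj. destruct (nl_ge l Hl) as [A B].
  assert (E : Defs.pos (Sidx l + j) = (l, j)) by (apply pos_at; lia).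
  destruct (T_facts _ l j E) as [G [N1 N2]].
  pose proof (gap_even q _ l j Hq E Ev) as GE.
  unfold Lb in GE. rewrite (proj2 (Nat.ltb_lt (S j) (nl l)) ltac:(lia)) in GE.
  assert (0 <= delta l / INR (S j)).
  { apply Rdiv_le_0_compat; [apply delta_nonneg; lia|]. apply lt_0_INR; lia. }
  unfold T. set (g := gap 2 Xseq (Qseq q) (S (Sidx l + j))) in *.
  set (nn := norm1 2 (Xseq (S (Sidx l + j)))) in *.
  apply (Rle_trans _ (g / 2)); [lra|].
  unfold Rdiv. apply Rmult_le_compat_l; [lra|]. apply Rinv_le_contravar; lra.
Qed.

Definition layer (l : nat) : R := rsum (fun j => T (Sidx l + j)) (nl l).

Lemma layer_nonneg l : 0 <= layer l.
Proof. apply rsum_nonneg. intros; apply T_nonneg. Qed.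

Lemma layer_even l : (2 <= l)%nat -> Nat.even l = true ->
  / (4 * alpha) * (ln (ln (INR l + 2)) - ln (ln (INR l))) <= layer l.
Proof.
  intros Hl Ev. destruct (nl_ge l Hl) as [A B].
  pose proof alpha_pos as Ha.
  assert (S1 : rsum (fun j => T (Sidx l + j)) l <= layer l).
  { apply rsum_mono_n; [intros; apply T_nonneg|lia]. }
  assert (S2 : rsum (fun j => delta l / 2 * / INR (S j)) l <= rsum (fun j => T (Sidx l + j)) l).
  { apply rsum_le. intros i Hi. pose proof (T_even l i Hl Ev Hi). unfold Rdiv in *. lra. }
  assert (S3 : rsum (fun j => delta l / 2 * / INR (S j)) l = delta l / 2 * rsum (fun j => / INR (S j)) l).
  { generalize (delta l / 2) as d. clear. intros d. induction l; cbn [rsum]; [ring|]. rewrite IHl. ring. }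
  pose proof (harmonic_ln l) as H.
  pose proof (ln_pos_ge2 l Hl) as L0. pose proof (INR_ge2 l Hl).
  assert (ln (INR l) <= ln (INR l + 1)) by (apply ln_le; lra).
  rewrite delta_eq in S2, S3 by lia.
  pose proof (lnln_step l Hl) as LL.
  unfold harm_term in S2, S3. replace (2 <=? l)%nat with true in S2, S3 by (symmetry; apply Nat.leb_le; lia).
  assert (Key : 1 / (INR l * ln (INR l) ^ 2) / alpha / 2 * ln (INR l) = / (2 * alpha) * (1 / (INR l * ln (INR l)))).
  { field. split; lra. }
  assert (P : 0 <= 1 / (INR l * ln (INR l) ^ 2) / alpha / 2).
  { apply Rlt_le. repeat apply Rdiv_lt_0_compat; try lra. simpl. nra. }
  assert (1 / (INR l * ln (INR l) ^ 2) / alpha / 2 * ln (INR l) <=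
          1 / (INR l * ln (INR l) ^ 2) / alpha / 2 * rsum (fun j => / INR (S j)) l).
  { apply Rmult_le_compat_l; lra. }
  assert (/ (4 * alpha) * (ln (ln (INR l + 2)) - ln (ln (INR l))) <=
          / (2 * alpha) * (1 / (INR l * ln (INR l)))).
  { replace (/ (2 * alpha) * (1 / (INR l * ln (INR l)))) with (/ (4 * alpha) * (2 / (INR l * ln (INR l)))) by (field; split; lra).
    apply Rmult_le_compat_l; [apply Rlt_le, Rinv_0_lt_compat; lra|lra]. }
  lra.
Qed.

Lemma partial_lb K :
  / (4 * alpha) * (ln (ln (INR (2 * K + 2))) - ln (ln 2)) <= rsum T (Sidx (2 * K + 2)).
Proof.
  induction K as [|K IH].
  - simpl. replace (1 + 1) with 2 by ring. rewrite Rminus_diag, Rmult_0_r. lra.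
  - replace (2 * S K + 2)%nat with (S (S (2 * K + 2))) by lia.
    rewrite (Sidx_S (S (2 * K + 2))) by lia. rewrite (Sidx_S (2 * K + 2)) by lia.
    rewrite !rsum_split. fold (layer (2 * K + 2)). fold (layer (S (2 * K + 2))).
    assert (Ev : Nat.even (2 * K + 2) = true).
    { replace (2 * K + 2)%nat with (2 * (K + 1))%nat by lia. apply Nat.even_mul. }
    pose proof (layer_even (2 * K + 2) ltac:(lia) Ev).
    pose proof (layer_nonneg (S (2 * K + 2))).
    replace (INR (S (S (2 * K + 2)))) with (INR (2 * K + 2) + 2) by (rewrite !S_INR; ring).
    pose proof (rsum_nonneg (fun j => T (Sidx (2 * K + 2) + nl (2 * K + 2) + j)) (nl (S (2 * K + 2))) (fun i => T_nonneg _)). lra.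
Qed.

Lemma main_lim : is_lim_seq (MenuGap_partial 2 Xseq (Qseq q)) p_infty.
Proof.
  apply is_lim_seq_spec. intros M.
  pose proof alpha_pos as Ha.
  set (y := M * (4 * alpha) + ln (ln 2)).
  pose proof is_lim_seq_INR as HI. apply is_lim_seq_spec in HI.
  destruct (HI (exp (exp y))) as [N HN].
  set (K := N).
  assert (HK : exp (exp y) < INR (2 * K + 2)) by (apply HN; unfold K; lia).
  assert (L1 : exp y < ln (INR (2 * K + 2))).
  { rewrite <- (ln_exp (exp y)). apply ln_increasing; [apply exp_pos|lra]. }
  assert (L2 : y < ln (ln (INR (2 * K + 2)))).
  { rewrite <- (ln_exp y). apply ln_increasing; [apply exp_pos|lra]. }
  pose proof (partial_lb K) as PL.
  assert (M < / (4 * alpha) * (ln (ln (INR (2 * K + 2))) - ln (ln 2))).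
  { apply (Rmult_lt_reg_l (4 * alpha)); [lra|]. rewrite <- Rmult_assoc, Rinv_r, Rmult_1_l by lra.
    unfold y in L2. lra. }
  exists (Sidx (2 * K + 2)). intros n Hn.
  unfold MenuGap_partial. fold T.
  assert (rsum T (Sidx (2 * K + 2)) <= rsum T n) by (apply rsum_mono_n; [apply T_nonneg|lia]).
  lra.
Qed.

End Main.

Theorem proposition5p8 (q : nat -> nat -> nat -> R) :
  q_admissible q -> MenuGap_is 2 Xseq (Qseq q) p_infty.
Proof. intros Hq. unfold MenuGap_is. apply main_lim; auto. Qed.
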